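(* Under the Setting and Algorithm described in the context, if $\{x_k\}_{k\ge1}$ is generated by the inexact CSA algorithm with policy (P1), then $\mathcal B\neq\emptyset$, so that $\bar x_{N,s}$ is well defined.
   Context: Setting. $\mathcal X\subset\mathbb R^n$ is convex and compact; $f:\mathcal X\to\mathbb R$ is convex and $L_f$-Lipschitz; $\Delta\subset\mathbb R^d$ is compact; $g:\mathcal X\times\Delta\to\mathbb R$ is such that for every $\delta\in\Delta$, $x\mapsto g(x,\delta)$ is convex and $L_{g,\mathcal X}$-Lipschitz, and for every $x\in\mathcal X$, $\delta\mapsto g(x,\delta)$ is $L_{g,\Delta}$-Lipschitz. Let $G(x):=\max_{\delta\in\Delta}g(x,\delta)$ and assume the problem $\min_{x\in\mathcal X}\{f(x):G(x)\le0\}$ has an optimal solution $x^*$. Norms are Euclidean. $f'(x)$ denotes a subgradient of $f$ at $x$ and $g'(x,\delta)$ a subgradient of $g(\cdot,\delta)$ at $x$. Let $\omega_{\mathcal X}:\mathcal X\to\mathbb R$ be continuously differentiable and $1$-strongly convex; $V(x,z):=\omega_{\mathcal X}(z)-\omega_{\mathcal X}(x)-\langle\nabla\omega_{\mathcal X}(x),z-x\rangle$; prox-mapping $P_{x,\mathcal X}(y):=\arg\min_{z\in\mathcal X}\{\langle y,z\rangle+V(x,z)\}$; $D_{\mathcal X}:=\sqrt{\max_{x,z\in\mathcal X}V(x,z)}$. Algorithm (inexact CSA). Inputs: $N\ge1$, $x_1\in\mathcal X$, tolerances $\eta_k>0$, step-sizes $\gamma_k>0$. For $k=1,\dots,N$: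 choose some $\delta_k\in\Delta$ (an approximate maximizer of $g(x_k,\cdot)$); set $h_k=f'(x_k)$ if $g(x_k,\delta_k)\le\eta_k$ and $h_k=g'(x_k,\delta_k)$ otherwise; set $x_{k+1}=P_{x_k,\mathcal X}(\gamma_kh_k)$. For $1\le s\le N$ let $I=\{s,\dots,N\}$, $\mathcal B:=\{k\in I: g(x_k,\delta_k)\le\eta_k\}$, $\mathcal N:=I\setminus\mathcal B$, and output $\bar x_{N,s}:=\sum_{k\in\mathcal B}\gamma_kx_k/\sum_{k\in\mathcal B}\gamma_k$. Policy (P1): $\eta_k=\frac{6(L_f+L_{g,\mathcal X})D_{\mathcal X}}{\sqrt k}$, $\gamma_k=\frac{D_{\mathcal X}}{\sqrt k(L_f+L_{g,\mathcal X})}$ for $k=1,\dots,N$, and $s=\lceil N/2\rceil$. *)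

(* Defs.v *)
From Stdlib Require Import Reals Lra.
Open Scope R_scope.

(* Points of R^m are encoded as functions nat -> R whose coordinates
   of index >= m vanish (see [inRn]). *)
Definition vec := nat -> R.

Fixpoint rsum (m : nat) (u : nat -> R) : R :=
  match m with O => 0 | S p => rsum p u + u p end.

Definition dot (m : nat) (u v : vec) : R := rsum m (fun i => u i * v i).
Definition vnorm (m : nat) (u : vec) : R := sqrt (dot m u u).
Definition vsub (u v : vec) : vec := fun i => u i - v i.
Definition vscale (a : R) (u : vec) : vec := fun i => a * u i.
Definition vcomb (t : R) (u v : vec) : vec := fun i => t * u i + (1 - t) * v i.

Definition inRn (m : nat) (u : vec) : Prop := forall i, (m <= i)%nat -> u i = 0.
Definition subset_Rn (m : nat) (A : vec -> Prop) : Prop := forall u, A u -> inRn m u.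

Definition convex_set (A : vec -> Prop) : Prop :=
  forall u v t, A u -> A v -> 0 <= t <= 1 -> A (vcomb t u v).

Definition seq_cv (m : nat) (u : nat -> vec) (l : vec) : Prop :=
  forall eps, 0 < eps -> exists K, forall k, (K <= k)%nat -> vnorm m (vsub (u k) l) < eps.

(* sequential compactness (equivalent to compactness in R^m) *)
Definition seq_compact (m : nat) (A : vec -> Prop) : Prop :=
  forall u : nat -> vec, (forall k, A (u k)) ->
  exists (phi : nat -> nat) (l : vec),
    (forall k, (phi k < phi (S k))%nat) /\ A l /\ seq_cv m (fun k => u (phi k)) l.

Definition convex_on (A : vec -> Prop) (F : vec -> R) : Prop :=
  forall u v t, A u -> A v -> 0 <= t <= 1 ->
    F (vcomb t u v) <= t * F u + (1 - t) * F v.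

Definition lipschitz_on (m : nat) (A : vec -> Prop) (F : vec -> R) (L : R) : Prop :=
  forall u v, A u -> A v -> Rabs (F u - F v) <= L * vnorm m (vsub u v).

Definition is_subgradient (m : nat) (A : vec -> Prop) (F : vec -> R) (u s : vec) : Prop :=
  inRn m s /\ forall z, A z -> F z >= F u + dot m s (vsub z u).

Definition has_gradient_on (m : nat) (A : vec -> Prop) (w : vec -> R) (gw : vec -> vec) : Prop :=
  forall u, A u -> inRn m (gw u) /\
    forall eps, 0 < eps -> exists del, 0 < del /\ forall z, A z ->
      vnorm m (vsub z u) < del ->
      Rabs (w z - w u - dot m (gw u) (vsub z u)) <= eps * vnorm m (vsub z u).

Definition vcontinuous_on (m : nat) (A : vec -> Prop) (G : vec -> vec) : Prop :=
  forall u, A u -> forall eps, 0 < eps -> exists del, 0 < del /\ forall z, A z ->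
    vnorm m (vsub z u) < del -> vnorm m (vsub (G z) (G u)) < eps.

Definition strongly_convex1 (m : nat) (A : vec -> Prop) (w : vec -> R) : Prop :=
  forall u v t, A u -> A v -> 0 <= t <= 1 ->
    w (vcomb t u v) <= t * w u + (1 - t) * w v - t * (1 - t) / 2 * (vnorm m (vsub u v)) ^ 2.

Definition bregman (m : nat) (w : vec -> R) (gw : vec -> vec) (u z : vec) : R :=
  w z - w u - dot m (gw u) (vsub z u).

Definition is_prox (m : nat) (A : vec -> Prop) (w : vec -> R) (gw : vec -> vec)
  (u y p : vec) : Prop :=
  A p /\ forall z, A z -> dot m y p + bregman m w gw u p <= dot m y z + bregman m w gw u z.

Definition csa_eta (Lf LgX DX : R) (k : nat) : R := 6 * (Lf + LgX) * DX / sqrt (INR k).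
Definition csa_gamma (Lf LgX DX : R) (k : nat) : R := DX / (sqrt (INR k) * (Lf + LgX)).

Definition csa_h (g : vec -> vec -> R) (fp : vec -> vec) (gp : vec -> vec -> vec)
  (eta : nat -> R) (x delta : nat -> vec) (k : nat) : vec :=
  if Rle_dec (g (x k) (delta k)) (eta k) then fp (x k) else gp (x k) (delta k).

(* Main.v *)
Require Import Defs.
From Stdlib Require Import Reals.
From Stdlib Require Import Lra Lia Psatz Classical FunctionalExtensionality.
Open Scope R_scope.
Lemma dot_vsub_r m a b c : dot m a (vsub b c) = dot m a b - dot m a c.
Proof. unfold dot, vsub; induction m; simpl; [ring|rewrite IHm; ring]. Qed.
Lemma dot_vsub_l m a b c : dot m (vsub a b) c = dot m a c - dot m b c.
Proof. unfold dot, vsub; induction m; simpl; [ring|rewrite IHm; ring]. Qed.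
Lemma dot_vscale_r m a s b : dot m a (vscale s b) = s * dot m a b.
Proof. unfold dot, vscale; induction m; simpl; [ring|rewrite IHm; ring]. Qed.
Lemma dot_vscale_l m a s b : dot m (vscale s a) b = s * dot m a b.
Proof. unfold dot, vscale; induction m; simpl; [ring|rewrite IHm; ring]. Qed.
Lemma dot_vcomb_r m a t b c : dot m a (vcomb t b c) = t * dot m a b + (1 - t) * dot m a c.
Proof. unfold dot, vcomb; induction m; simpl; [ring|rewrite IHm; ring]. Qed.
Lemma dot_comm m a b : dot m a b = dot m b a.
Proof. unfold dot; induction m; simpl; [ring|rewrite IHm; ring]. Qed.
Lemma dot_nonneg m a : 0 <= dot m a a.
Proof. unfold dot; induction m; simpl; [lra| nra]. Qed.
Lemma vnorm_sq m a : vnorm m a ^ 2 = dot m a a.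
Proof. unfold vnorm; simpl; rewrite Rmult_1_r; apply sqrt_sqrt, dot_nonneg. Qed.
Lemma vnorm_nonneg m a : 0 <= vnorm m a.
Proof. apply sqrt_pos. Qed.
Lemma vnorm_scale m t a : 0 <= t -> vnorm m (vscale t a) = t * vnorm m a.
Proof.
  intro Ht. unfold vnorm. rewrite dot_vscale_l, dot_vscale_r, <- Rmult_assoc.
  rewrite sqrt_mult; [| nra | apply dot_nonneg]. rewrite sqrt_square; auto.
Qed.

Lemma frechet_dir m X w gw u z :
  convex_set X -> has_gradient_on m X w gw -> X u -> X z ->
  forall eps t1, 0 < eps -> 0 < t1 -> exists t, 0 < t /\ t <= t1 /\ t <= 1 /\
    Rabs (w (vcomb t z u) - w u - t * dot m (gw u) (vsub z u)) <= eps * t.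
Proof.
  intros Hc Hg Hu Hz eps t1 He Ht1.
  destruct (Hg u Hu) as [_ Hd].
  set (nv := vnorm m (vsub z u)).
  assert (Hnv : 0 <= nv) by apply vnorm_nonneg.
  destruct (Hd (eps / (nv + 1))) as [del [Hdel H]].
  { apply Rdiv_lt_0_compat; lra. }
  set (t := Rmin 1 (Rmin t1 (del / (2 * (nv + 1))))).
  assert (Hdp : 0 < del / (2 * (nv + 1))) by (apply Rdiv_lt_0_compat; lra).
  assert (Ht0 : 0 < t) by (unfold t; repeat apply Rmin_pos; lra).
  assert (Ht1' : t <= 1) by apply Rmin_l.
  assert (Ht2 : t <= t1) by (eapply Rle_trans; [apply Rmin_r| apply Rmin_l]).
  assert (Ht3 : t <= del / (2 * (nv + 1))) by (eapply Rle_trans; [apply Rmin_r| apply Rmin_r]).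
  exists t; split; [lra|split;[lra|split;[lra|]]].
  assert (Heq : vsub (vcomb t z u) u = vscale t (vsub z u)).
  { apply functional_extensionality; intro i; unfold vsub, vcomb, vscale; ring. }
  assert (HX : X (vcomb t z u)) by (apply Hc; auto; lra).
  assert (Hn : vnorm m (vsub (vcomb t z u) u) = t * nv).
  { rewrite Heq, vnorm_scale; [reflexivity| lra]. }
  specialize (H _ HX).
  rewrite Hn in H. rewrite Heq, dot_vscale_r in H.
  assert (Hk : t * (nv + 1) <= del / 2).
  { apply Rmult_le_compat_r with (r := nv + 1) in Ht3; [|lra].
    replace (del / (2 * (nv + 1)) * (nv + 1)) with (del / 2) in Ht3 by (field; lra). lra. }
  assert (Hlt : t * nv < del) by nra.
  specialize (H Hlt).
  eapply Rle_trans; [exact H|].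
  assert (E : eps / (nv + 1) * (nv + 1) = eps) by (field; lra).
  assert (0 < eps / (nv + 1)) by (apply Rdiv_lt_0_compat; lra).
  nra.
Qed.

Lemma first_order_ge m X w gw u z K :
  convex_set X -> has_gradient_on m X w gw -> X u -> X z ->
  (forall t, 0 < t <= 1 -> w (vcomb t z u) - w u >= t * K) ->
  dot m (gw u) (vsub z u) >= K.
Proof.
  intros Hc Hg Hu Hz HK. apply Rnot_lt_ge; intro Hlt.
  set (dd := dot m (gw u) (vsub z u)) in *.
  destruct (frechet_dir m X w gw u z Hc Hg Hu Hz ((K - dd)/2) 1) as [t [H0 [_ [H1 H2]]]]; try lra.
  pose proof (Rle_abs (w (vcomb t z u) - w u - t * dd)).
  specialize (HK t (conj H0 H1)). apply Rge_le in HK.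
  fold dd in H2. assert (t * ((K - dd) / 2) <= 0) by lra.
  assert (0 < t * ((K - dd) / 2)) by (apply Rmult_lt_0_compat; lra). lra.
Qed.

Lemma first_order_le m X w gw u z K M :
  convex_set X -> has_gradient_on m X w gw -> X u -> X z -> 0 <= M ->
  (forall t, 0 < t <= 1 -> w (vcomb t z u) - w u <= t * K + t * t * M) ->
  dot m (gw u) (vsub z u) <= K.
Proof.
  intros Hc Hg Hu Hz HM HK. apply Rnot_lt_le; intro Hlt.
  set (dd := dot m (gw u) (vsub z u)) in *.
  destruct (frechet_dir m X w gw u z Hc Hg Hu Hz ((dd - K)/2) ((dd - K)/(2*(M+1))))
    as [t [H0 [Ht1 [H1 H2]]]]; try lra.
  { apply Rdiv_lt_0_compat; lra. }
  pose proof (Rle_abs (- (w (vcomb t z u) - w u - t * dd))).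
  rewrite Rabs_Ropp in H. fold dd in H2.
  specialize (HK t (conj H0 H1)).
  assert (A : t * dd - (dd - K) / 2 * t <= t * K + t * t * M) by lra.
  assert (B : dd - (dd - K) / 2 <= K + t * M).
  { apply Rmult_le_reg_l with t; [lra|]. nra. }
  assert (C : t * (M + 1) <= (dd - K) / 2).
  { apply Rmult_le_compat_r with (r := M + 1) in Ht1; [|lra].
    replace ((dd - K) / (2 * (M + 1)) * (M + 1)) with ((dd - K) / 2) in Ht1 by (field; lra). lra. }
  nra.
Qed.

Lemma sq2 m a b : dot m (vsub a b) (vsub a b) = dot m a a - 2 * dot m b a + dot m b b.
Proof. unfold dot, vsub; induction m; simpl; [ring|rewrite IHm; ring]. Qed.
Lemma sq3 m y u p : dot m (vsub y (vsub u p)) (vsub y (vsub u p)) =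
  dot m y y - 2 * dot m y u + 2 * dot m y p + dot m u u - 2 * dot m u p + dot m p p.
Proof. unfold dot, vsub; induction m; simpl; [ring|rewrite IHm; ring]. Qed.

Lemma breg_sc m X w gw u p :
  convex_set X -> has_gradient_on m X w gw -> strongly_convex1 m X w -> X u -> X p ->
  dot m (gw u) (vsub p u) <= w p - w u - vnorm m (vsub p u) ^ 2 / 2.
Proof.
  intros Hc Hg Hs Hu Hp.
  apply (first_order_le m X w gw u p _ (vnorm m (vsub p u) ^ 2 / 2)); auto.
  - pose proof (pow2_ge_0 (vnorm m (vsub p u))); lra.
  - intros t Ht. pose proof (Hs p u t Hp Hu ltac:(lra)).
    set (a := vnorm m (vsub p u) ^ 2) in *.
    assert (E : t * (1 - t) / 2 * a = t * (a/2) - t * t * (a / 2)) by field.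
    rewrite E in H. nra.
Qed.

Lemma breg_nonneg m X w gw u p :
  convex_set X -> has_gradient_on m X w gw -> strongly_convex1 m X w -> X u -> X p ->
  0 <= bregman m w gw u p.
Proof.
  intros. pose proof (breg_sc m X w gw u p H H0 H1 H2 H3).
  pose proof (pow2_ge_0 (vnorm m (vsub p u))). unfold bregman. lra.
Qed.

Lemma step_ineq m X w gw u p y z :
  convex_set X -> has_gradient_on m X w gw -> strongly_convex1 m X w -> X u -> X z ->
  is_prox m X w gw u y p ->
  dot m y u - dot m y z <= bregman m w gw u z - bregman m w gw p z + dot m y y / 2.
Proof.
  intros Hc Hg Hs Hu Hz [Hp Hpr].
  assert (H1 : dot m (gw p) (vsub z p) >=
     dot m y p - dot m y z + dot m (gw u) z - dot m (gw u) p).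
  { apply (first_order_ge m X w gw); auto. intros t Ht.
    assert (HX : X (vcomb t z p)) by (apply Hc; auto; lra).
    specialize (Hpr _ HX). unfold bregman in Hpr.
    rewrite !dot_vsub_r, !dot_vcomb_r in Hpr. nra. }
  pose proof (breg_sc m X w gw u p Hc Hg Hs Hu Hp) as H2.
  rewrite vnorm_sq in H2.
  pose proof (dot_nonneg m (vsub y (vsub u p))) as H3.
  rewrite sq3 in H3. rewrite sq2 in H2.
  unfold bregman. rewrite dot_vsub_r.
  rewrite dot_vsub_r in H2. lra.
Qed.
Theorem mainTheorem3
  (n d : nat) (X Delta : vec -> Prop) (f : vec -> R) (g : vec -> vec -> R)
  (Lf LgX LgD : R) (fp : vec -> vec) (gp : vec -> vec -> vec)
  (w : vec -> R) (gw : vec -> vec) (DX : R) (xstar : vec)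
  (N : nat) (x delta : nat -> vec)
  (HXs : subset_Rn n X) (HXc : convex_set X) (HXk : seq_compact n X)
  (HDs : subset_Rn d Delta) (HDk : seq_compact d Delta)
  (Hf : convex_on X f) (HfL : lipschitz_on n X f Lf)
  (Hg : forall del, Delta del ->
          convex_on X (fun y => g y del) /\ lipschitz_on n X (fun y => g y del) LgX)
  (HgD : forall y, X y -> lipschitz_on d Delta (fun del => g y del) LgD)
  (Hfp : forall y, X y -> is_subgradient n X f y (fp y) /\ vnorm n (fp y) <= Lf)
  (Hgp : forall y del, X y -> Delta del ->
          is_subgradient n X (fun z => g z del) y (gp y del) /\ vnorm n (gp y del) <= LgX)
  (Hopt : X xstar /\ (forall del, Delta del -> g xstar del <= 0) /\
          (forall y, X y -> (forall del, Delta del -> g y del <= 0) -> f xstar <= f y))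
  (Hw : has_gradient_on n X w gw /\ vcontinuous_on n X gw /\ strongly_convex1 n X w)
  (HD : 0 <= DX /\ (forall y z, X y -> X z -> bregman n w gw y z <= DX ^ 2) /\
        (exists y z, X y /\ X z /\ bregman n w gw y z = DX ^ 2))
  (Hpos : 0 < DX /\ 0 < Lf + LgX)
  (HN : (1 <= N)%nat)
  (Hx1 : X (x 1%nat))
  (Hdelta : forall k, (1 <= k <= N)%nat -> Delta (delta k))
  (Hstep : forall k, (1 <= k <= N)%nat ->
     is_prox n X w gw (x k)
       (vscale (csa_gamma Lf LgX DX k) (csa_h g fp gp (csa_eta Lf LgX DX) x delta k))
       (x (S k))) :
  exists k, (Nat.div (N + 1) 2 <= k <= N)%nat /\
            g (x k) (delta k) <= csa_eta Lf LgX DX k.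
Proof.
  destruct Hw as [Hgr [_ Hsc]]. destruct HD as [HD0 [HDb _]].
  destruct Hpos as [HDp HLp]. destruct Hopt as [Hxs [Hgxs _]].
  assert (HX : forall k, (1 <= k <= N + 1)%nat -> X (x k)).
  { intros k Hk. destruct k as [|k']; [lia|].
    destruct (Nat.eq_dec k' 0) as [->|Hk']; [exact Hx1|].
    destruct (Hstep k' ltac:(lia)) as [Hp _]. exact Hp. }
  assert (HLf : 0 <= Lf).
  { destruct (Hfp _ Hx1) as [_ Hn]. pose proof (vnorm_nonneg n (fp (x 1%nat))). lra. }
  assert (HLg : 0 <= LgX).
  { destruct (Hgp _ _ Hx1 (Hdelta 1%nat ltac:(lia))) as [_ Hn].
    pose proof (vnorm_nonneg n (gp (x 1%nat) (delta 1%nat))). lra. }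
  apply NNPP; intro Hno.
  set (s := Nat.div (N + 1) 2) in *.
  assert (Hs : (1 <= s /\ 2 * s <= N + 1)%nat).
  { pose proof (Nat.div_mod (N+1) 2 ltac:(lia)). pose proof (Nat.mod_upper_bound (N+1) 2 ltac:(lia)).
    unfold s. lia. }
  assert (HNpos : 0 < INR N) by (apply lt_0_INR; lia).
  set (a := fun k => bregman n w gw (x k) xstar).
  set (c := 5 * DX ^ 2 / INR N).
  assert (Hstp : forall k, (s <= k <= N)%nat -> a k - a (S k) >= c).
  { intros k Hk.
    assert (Hgk : csa_eta Lf LgX DX k < g (x k) (delta k)).
    { apply Rnot_le_lt; intro Hle; apply Hno; exists k; split; [lia|exact Hle]. }
    assert (Hxk : X (x k)) by (apply HX; lia).
    assert (Hdk : Delta (delta k)) by (apply Hdelta; lia).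
    pose proof (Hstep k ltac:(lia)) as Hpr.
    unfold csa_h in Hpr. destruct (Rle_dec _ _) as [Hle|_]; [lra|].
    set (h := gp (x k) (delta k)) in *.
    set (gam := csa_gamma Lf LgX DX k) in *.
    pose proof (step_ineq n X w gw (x k) (x (S k)) (vscale gam h) xstar HXc Hgr Hsc Hxk Hxs Hpr) as Hst.
    rewrite !dot_vscale_l, dot_vscale_r in Hst.
    destruct (Hgp _ _ Hxk Hdk) as [[_ Hsub] Hnh]. fold h in Hsub, Hnh.
    specialize (Hsub xstar Hxs). rewrite dot_vsub_r in Hsub.
    specialize (Hgxs _ Hdk).
    pose proof (vnorm_sq n h) as Hsq.
    pose proof (vnorm_nonneg n h) as Hnn.
    assert (Hhh : dot n h h <= LgX ^ 2) by nra.
    assert (HkR : 1 <= INR k) by (apply (le_INR 1); lia).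
    set (r := sqrt (INR k)).
    assert (Hr2 : r * r = INR k) by (apply sqrt_sqrt; lra).
    assert (Hr : 0 < r) by (apply sqrt_lt_R0; lra).
    assert (Hgam : gam = DX / (r * (Lf + LgX))) by reflexivity.
    assert (Hgp0 : 0 < gam) by (rewrite Hgam; apply Rdiv_lt_0_compat; nra).
    assert (Heta : csa_eta Lf LgX DX k = 6 * (Lf + LgX) * DX / r) by reflexivity.
    assert (E1 : gam * csa_eta Lf LgX DX k = 6 * (DX ^ 2 / INR k)).
    { rewrite Hgam, Heta, <- Hr2. field. lra. }
    assert (E2 : gam * gam * (Lf + LgX) ^ 2 = DX ^ 2 / INR k).
    { rewrite Hgam, <- Hr2. field. lra. }
    assert (HLL : LgX ^ 2 <= (Lf + LgX) ^ 2) by nra.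
    assert (Hyy : gam * (gam * dot n h h) <= DX ^ 2 / INR k) by nra.
    assert (Hlin : gam * (dot n h (x k) - dot n h xstar) >= gam * csa_eta Lf LgX DX k) by nra.
    assert (Hcmp : DX ^ 2 / INR k >= DX ^ 2 / INR N).
    { unfold Rdiv. apply Rle_ge, Rmult_le_compat_l; [nra|].
      apply Rinv_le_contravar; [lra| apply le_INR; lia]. }
    assert (0 <= DX ^ 2 / INR N) by (unfold Rdiv; apply Rmult_le_pos; [nra| left; apply Rinv_0_lt_compat; lra]). unfold a, c. lra. }
  assert (Htel : forall j, (s + j <= N + 1)%nat -> a s - a (s + j)%nat >= INR j * c).
  { induction j as [|j IH]; intro Hj.
    - rewrite Nat.add_0_r; simpl; lra.
    - rewrite Nat.add_succ_r, S_INR. specialize (IH ltac:(lia)).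
      specialize (Hstp (s + j)%nat ltac:(lia)). lra. }
  specialize (Htel (N + 1 - s)%nat ltac:(lia)).
  replace (s + (N + 1 - s))%nat with (N + 1)%nat in Htel by lia.
  assert (Has : a s <= DX ^ 2) by (apply HDb; [apply HX; lia| exact Hxs]).
  assert (Ha0 : 0 <= a (N + 1)%nat) by (apply (breg_nonneg n X); auto; apply HX; lia).
  assert (Hj : INR N <= 2 * INR (N + 1 - s)).
  { replace 2 with (INR 2) by reflexivity. rewrite <- mult_INR. apply le_INR. lia. }
  assert (Hc : c * INR N = 5 * DX ^ 2) by (unfold c; field; lra).
  assert (Hcp : 0 < c) by (unfold c; apply Rdiv_lt_0_compat; nra).
  nra.
Qed.
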